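(* (1) For every $t\ge0$, $\mathfrak{e}^D_t\in\mathcal{E}(\mathcal{P}^{s+}_{3,5})$, but $\mathfrak{e}^D_t\notin\mathcal{E}(\mathcal{P}^{+}_{3,5})$. (2) If $t>0$, $t\ne1$ and $f\in\mathcal{P}^{s+}_{3,5}$ satisfies $f(t,1,1)=f(1,1,1)=f(0,0,1)=0$, then $f=\lambda\mathfrak{e}^D_t$ for some $\lambda\ge0$. (3) If $f\in\mathcal{P}^{s+}_{3,5}$ satisfies $f(1,1,1)=f_{aa}(1,1,1)=f(0,0,1)=0$, then $f=\lambda\mathfrak{e}^D_1$ for some $\lambda\ge0$; in particular $\mathfrak{e}^D_1=s_1-8s_3\in\mathcal{E}(\mathcal{P}^{s+}_{3,5})$. (4) If $f\in\mathcal{P}^{s+}_{3,5}$ satisfies $f(1,1,1)=f(0,0,1)=f_a(0,0,1)=0$ and $f_{aa}(0,0,1)+f_{ab}(0,0,1)=0$, then $f=\lambda\mathfrak{e}^D_\infty$ for some $\lambda\ge0$; in particular $\mathfrak{e}^D_\infty=s_2-2s_3\in\mathcal{E}(\mathcal{P}^{s+}_{3,5})$.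
   Context: Let $a,b,c$ be variables. For nonnegative integers $m,n$ put $S_{m,n}=a^mb^n+b^mc^n+c^ma^n$, $S_n=S_{n,0}=a^n+b^n+c^n$, $T_{m,n}=S_{m,n}+S_{n,m}$, $U=abc$ (so $S_{1,1}=ab+bc+ca$). Let $\mathcal{H}^s_{3,5}$ be the real vector space of symmetric homogeneous polynomials of degree 5 in $\mathbb{R}[a,b,c]$; it has basis $s_0=S_5-US_{1,1}$, $s_1=T_{4,1}-2US_{1,1}$, $s_2=T_{3,2}-2US_{1,1}$, $s_3=US_2-US_{1,1}$, $s_4=US_{1,1}$. Let $\mathcal{P}^{s+}_{3,5}=\{f\in\mathcal{H}^s_{3,5}: f(a,b,c)\ge 0\text{ for all }a,b,c\ge0\}$, and let $\mathcal{P}^+_{3,5}$ be the cone of all (not necessarily symmetric) real homogeneous quintic forms in $a,b,c$ that are nonnegative on $\mathbb{R}_{\ge0}^3$. For a closed convex cone $\mathcal{P}$, an element $f\in\mathcal{P}\setminus\{0\}$ is extremal if whenever $f=g+h$ with $g,h\in\mathcal{P}$ we have $g,h\in\mathbb{R}_{\ge0}f$; $\mathcal{E}(\mathcal{P})$ is the set of extremal elements. Subscripts denote partial derivatives: $f_a=\partial f/\partial a$, $f_{aa}=\partial^2f/\partial a^2$, $f_{ab}=\partial^2f/\partial a\partial b$, etc. Family D: $\mathfrak{e}^D_t=s_1+(t^2-1)s_2-2(t+1)^2s_3$, and $\mathfrak{e}^D_\infty=s_2-2s_3$. *)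

(* Defs.v *)
From HB Require Import structures.
From mathcomp Require Import all_boot all_order all_algebra.
From mathcomp Require Import reals.
From mathcomp Require Import mpoly.
Set Implicit Arguments. Unset Strict Implicit. Unset Printing Implicit Defensive.
Import Order.TTheory GRing.Theory Num.Theory.
Local Open Scope ring_scope.

Section Defs.
Variable R : realType.
Local Notation Q := {mpoly R[3]}.

Definition ia : 'I_3 := inord 0.
Definition ib : 'I_3 := inord 1.
Definition ic : 'I_3 := inord 2.
Definition Xa : Q := 'X_ia.
Definition Xb : Q := 'X_ib.
Definition Xc : Q := 'X_ic.

Definition pt (a b c : R) : 'I_3 -> R := fun i => nth 0 [:: a; b; c] i.
Definition ev (f : Q) (a b c : R) : R := f.@[pt a b c].

Definition da (f : Q) : Q := mderiv ia f.
Definition db (f : Q) : Q := mderiv ib f.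

Definition Smn (m n : nat) : Q := Xa ^+ m * Xb ^+ n + Xb ^+ m * Xc ^+ n + Xc ^+ m * Xa ^+ n.
Definition Sn (n : nat) : Q := Smn n 0.
Definition Tmn (m n : nat) : Q := Smn m n + Smn n m.
Definition U : Q := Xa * Xb * Xc.

Definition s0 : Q := Sn 5 - U * Smn 1 1.
Definition s1 : Q := Tmn 4 1 - 2%:R *: (U * Smn 1 1).
Definition s2 : Q := Tmn 3 2 - 2%:R *: (U * Smn 1 1).
Definition s3 : Q := U * Sn 2 - U * Smn 1 1.
Definition s4 : Q := U * Smn 1 1.

Definition eD (t : R) : Q := s1 + (t ^+ 2 - 1) *: s2 - (2%:R * (t + 1) ^+ 2) *: s3.
Definition eDinf : Q := s2 - 2%:R *: s3.

Definition Hs35 (f : Q) : Prop := f \is symmetric /\ f \is 5.-homog.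
Definition nonneg_orthant (f : Q) : Prop :=
  forall a b c : R, 0 <= a -> 0 <= b -> 0 <= c -> 0 <= ev f a b c.
Definition Ps35 (f : Q) : Prop := Hs35 f /\ nonneg_orthant f.
Definition P35 (f : Q) : Prop := f \is 5.-homog /\ nonneg_orthant f.

Definition extremal (P : Q -> Prop) (f : Q) : Prop :=
  P f /\ f != 0 /\
  forall g h : Q, P g -> P h -> f = g + h ->
    (exists l : R, 0 <= l /\ g = l *: f) /\ (exists l : R, 0 <= l /\ h = l *: f).
End Defs.

(* Main.v *)
Require Import Defs.
From HB Require Import structures.
From mathcomp Require Import all_boot all_order all_algebra.
From mathcomp Require Import reals.
From mathcomp Require Import mpoly.
From mathcomp Require Import fingroup perm.
From mathcomp Require Import ring lra zify.
Import Order.TTheory GRing.Theory Num.Theory.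
Local Open Scope ring_scope.

Lemma iaE : nat_of_ord ia = 0%N. Proof. by rewrite /ia inordK. Qed.
Lemma ibE : nat_of_ord ib = 1%N. Proof. by rewrite /ib inordK. Qed.
Lemma icE : nat_of_ord ic = 2%N. Proof. by rewrite /ic inordK. Qed.

Lemma ord3P (j : 'I_3) : [\/ j = ia, j = ib | j = ic].
Proof.
case: j => [[|[|[|k]]] Hk].
- by apply: Or31; apply/val_inj; rewrite /= iaE.
- by apply: Or32; apply/val_inj; rewrite /= ibE.
- by apply: Or33; apply/val_inj; rewrite /= icE.
- by [].
Qed.

Lemma iab : (ia == ib) = false. Proof. by rewrite -val_eqE /= iaE ibE. Qed.
Lemma iac : (ia == ic) = false. Proof. by rewrite -val_eqE /= iaE icE. Qed.
Lemma ibc : (ib == ic) = false. Proof. by rewrite -val_eqE /= ibE icE. Qed.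
Lemma iba : (ib == ia) = false. Proof. by rewrite -val_eqE /= iaE ibE. Qed.
Lemma ica : (ic == ia) = false. Proof. by rewrite -val_eqE /= iaE icE. Qed.
Lemma icb : (ic == ib) = false. Proof. by rewrite -val_eqE /= ibE icE. Qed.

Definition mk3 (x y z : nat) : 'X_{1..3} := [multinom nth 0%N [:: x; y; z] i | i < 3].

Lemma mk3E x y z (j : 'I_3) : mk3 x y z j = nth 0%N [:: x; y; z] j.
Proof. by rewrite /mk3 mnmE. Qed.

Lemma eq_mk3 x y z x' y' z' : (mk3 x y z == mk3 x' y' z') = [&& x == x', y == y' & z == z'].
Proof.
apply/eqP/and3P => [/mnmP H|[/eqP-> /eqP-> /eqP->] //].
move: (H ia) (H ib) (H ic); rewrite !mk3E iaE ibE icE /= => -> -> ->; by [].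
Qed.

Lemma mk3_eta (m : 'X_{1..3}) : m = mk3 (m ia) (m ib) (m ic).
Proof.
by apply/mnmP => j; rewrite mk3E; case: (ord3P j) => ->; rewrite ?iaE ?ibE ?icE.
Qed.

Lemma mdeg_mk3 x y z : mdeg (mk3 x y z) = (x + y + z)%N.
Proof. by rewrite mdegE !big_ord_recr big_ord0 /= !mk3E /= add0n. Qed.

Definition M {R : realType} x y z : {mpoly R[3]} := 'X_[mk3 x y z].

Lemma ptE (R : realType) (a b c : R) (j : 'I_3) : pt a b c j = nth 0 [:: a; b; c] j.
Proof. by []. Qed.

Lemma evM (R : realType) x y z (a b c : R) : ev (M x y z) a b c = a ^+ x * b ^+ y * c ^+ z.
Proof. by rewrite /ev /M mevalX !big_ord_recr big_ord0 /= !mk3E /= mul1r. Qed.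

Lemma daM (R : realType) x y z : da (M x y z) = x%:R *: (M x.-1 y z : {mpoly R[3]}).
Proof.
rewrite /da /M mderivX; congr (_ *: 'X_[_]); first by rewrite mk3E iaE.
apply/mnmP => j; rewrite mnmBE !mk3E mnm1E; case: (ord3P j) => ->;
  rewrite ?iaE ?ibE ?icE /= ?eqxx.
- by rewrite subn1.
- by rewrite iab subn0.
- by rewrite iac subn0.
Qed.

Lemma test (R : realType) (p q : {mpoly R[3]}) : (p + q)^+2 = p^+2 + 2%:R * p * q + q^+2.
Proof. ring. Qed.

Lemma XpowE (R : realType) x y z :
  (Xa R) ^+ x * (Xb R) ^+ y * (Xc R) ^+ z = M x y z.
Proof.
rewrite /Xa /Xb /Xc /M !mpolyXn -!mpolyXD; congr 'X_[_].
apply/mnmP => j; rewrite !mnmDE !mulmnE !mnm1E mk3E.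
by case: (ord3P j) => ->; rewrite ?iaE ?ibE ?icE /= ?eqxx ?iab ?iac ?ibc ?iba ?ica ?icb
  /= ?mul0n ?mul1n ?add0n ?addn0.
Qed.

Lemma SmnE (R : realType) m n : Smn R m n = M m n 0 + M 0 m n + M n 0 m.
Proof.
by rewrite /Smn -!XpowE !expr0 !mulr1 !mul1r (mulrC (Xc R ^+ m)).
Qed.

Lemma US2E (R : realType) : U R * Sn R 2 = M 3 1 1 + M 1 3 1 + M 1 1 3.
Proof. rewrite /Sn SmnE /U -!XpowE; ring. Qed.

Lemma US11E (R : realType) : U R * Smn R 1 1 = M 2 2 1 + M 2 1 2 + M 1 2 2.
Proof. rewrite SmnE /U -!XpowE; ring. Qed.

Definition B0 {R : realType} : {mpoly R[3]} := M 5 0 0 + M 0 5 0 + M 0 0 5.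
Definition B1 {R : realType} : {mpoly R[3]} :=
  M 4 1 0 + M 0 4 1 + M 1 0 4 + M 1 4 0 + M 0 1 4 + M 4 0 1.
Definition B2 {R : realType} : {mpoly R[3]} :=
  M 3 2 0 + M 0 3 2 + M 2 0 3 + M 2 3 0 + M 0 2 3 + M 3 0 2.
Definition B3 {R : realType} : {mpoly R[3]} := M 3 1 1 + M 1 3 1 + M 1 1 3.
Definition B4 {R : realType} : {mpoly R[3]} := M 2 2 1 + M 2 1 2 + M 1 2 2.
Definition Bsum {R : realType} (k0 k1 k2 k3 k4 : R) : {mpoly R[3]} :=
  k0 *: B0 + k1 *: B1 + k2 *: B2 + k3 *: B3 + k4 *: B4.

Lemma eDE (R : realType) (t : R) :
  eD t = Bsum 0 1 (t ^+ 2 - 1) (- (2%:R * (t + 1) ^+ 2)) (4%:R * t + 2%:R).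
Proof.
rewrite /eD /Bsum /s1 /s2 /s3 /Tmn /Sn US2E US11E !SmnE /B0 /B1 /B2 /B3 /B4.
rewrite -!mul_mpolyC; ring.
Qed.

Lemma eDinfE (R : realType) : eDinf R = Bsum 0 0 1 (- 2%:R) 0.
Proof.
rewrite /eDinf /Bsum /s2 /s3 /Tmn /Sn US2E US11E !SmnE /B0 /B1 /B2 /B3 /B4.
rewrite -!mul_mpolyC; ring.
Qed.

Lemma mk3_perm (p : 'S_3) x y z :
  [multinom (mk3 x y z) (p i) | i < 3] =
  mk3 (nth 0%N [:: x; y; z] (p ia)) (nth 0%N [:: x; y; z] (p ib)) (nth 0%N [:: x; y; z] (p ic)).
Proof.
apply/mnmP => j; rewrite mnmE !mk3E.
by case: (ord3P j) => ->; rewrite ?iaE ?ibE ?icE.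
Qed.

Lemma sw01 (R : realType) (f : {mpoly R[3]}) x y z : f \is symmetric ->
  f@_(mk3 x y z) = f@_(mk3 y x z).
Proof.
move=> Hs; rewrite -(msym_coeff (mk3 y x z) (tperm ia ib) Hs) mk3_perm.
by rewrite tpermL tpermR tpermD; rewrite ?iaE ?ibE ?icE ?iac ?ibc ?iab.
Qed.


Lemma sw12 (R : realType) (f : {mpoly R[3]}) x y z : f \is symmetric ->
  f@_(mk3 x y z) = f@_(mk3 x z y).
Proof.
move=> Hs; rewrite -(msym_coeff (mk3 x z y) (tperm ib ic) Hs) mk3_perm.
by rewrite tpermL tpermR tpermD; rewrite ?iaE ?ibE ?icE ?iac ?iab ?iba ?ica.
Qed.


Lemma Mh5 (R : realType) x y z : (x + y + z = 5)%N -> (M x y z : {mpoly R[3]}) \is 5.-homog.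
Proof. by move=> H; rewrite /M dhomogX /= mdeg_mk3 H. Qed.

Lemma Bsum_homog (R : realType) (k0 k1 k2 k3 k4 : R) : Bsum k0 k1 k2 k3 k4 \is 5.-homog.
Proof.
rewrite /Bsum /B0 /B1 /B2 /B3 /B4.
by repeat (apply: rpredD || apply: rpredZ || apply: Mh5).
Qed.

Definition cA {R : realType} (f : {mpoly R[3]}) := f@_(mk3 5 0 0).
Definition cB {R : realType} (f : {mpoly R[3]}) := f@_(mk3 4 1 0).
Definition cC {R : realType} (f : {mpoly R[3]}) := f@_(mk3 3 2 0).
Definition cD {R : realType} (f : {mpoly R[3]}) := f@_(mk3 3 1 1).
Definition cE {R : realType} (f : {mpoly R[3]}) := f@_(mk3 2 2 1).

Ltac sref := match goal with |- ?a = ?a => reflexivity end.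

Definition Mc (x y z x' y' z' : nat) : nat := [&& x == x', y == y' & z == z'].
Definition o0 x y z := (Mc 5 0 0 x y z + Mc 0 5 0 x y z + Mc 0 0 5 x y z)%N.
Definition o1 x y z := (Mc 4 1 0 x y z + Mc 0 4 1 x y z + Mc 1 0 4 x y z +
  Mc 1 4 0 x y z + Mc 0 1 4 x y z + Mc 4 0 1 x y z)%N.
Definition o2 x y z := (Mc 3 2 0 x y z + Mc 0 3 2 x y z + Mc 2 0 3 x y z +
  Mc 2 3 0 x y z + Mc 0 2 3 x y z + Mc 3 0 2 x y z)%N.
Definition o3 x y z := (Mc 3 1 1 x y z + Mc 1 3 1 x y z + Mc 1 1 3 x y z)%N.
Definition o4 x y z := (Mc 2 2 1 x y z + Mc 2 1 2 x y z + Mc 1 2 2 x y z)%N.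

Lemma McoefM (R : realType) x y z x' y' z' :
  (M x y z : {mpoly R[3]})@_(mk3 x' y' z') = (Mc x y z x' y' z')%:R.
Proof. by rewrite /M mcoeffX eq_mk3. Qed.

Lemma bsumC (R : realType) (k0 k1 k2 k3 k4 : R) x y z :
  (Bsum k0 k1 k2 k3 k4)@_(mk3 x y z) = k0 * (o0 x y z)%:R + k1 * (o1 x y z)%:R +
    k2 * (o2 x y z)%:R + k3 * (o3 x y z)%:R + k4 * (o4 x y z)%:R.
Proof.
by rewrite /Bsum /B0 /B1 /B2 /B3 /B4 !(mcoeffD, mcoeffZ, McoefM) /o0 /o1 /o2 /o3 /o4 !natrD.
Qed.

Lemma bsumCi (R : realType) (k0 k1 k2 k3 k4 : R) x y z :
  ((o0 x y z = 1 /\ o1 x y z = 0 /\ o2 x y z = 0 /\ o3 x y z = 0 /\ o4 x y z = 0)%N ->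
   (Bsum k0 k1 k2 k3 k4)@_(mk3 x y z) = k0) /\
  ((o0 x y z = 0 /\ o1 x y z = 1 /\ o2 x y z = 0 /\ o3 x y z = 0 /\ o4 x y z = 0)%N ->
   (Bsum k0 k1 k2 k3 k4)@_(mk3 x y z) = k1) /\
  ((o0 x y z = 0 /\ o1 x y z = 0 /\ o2 x y z = 1 /\ o3 x y z = 0 /\ o4 x y z = 0)%N ->
   (Bsum k0 k1 k2 k3 k4)@_(mk3 x y z) = k2) /\
  ((o0 x y z = 0 /\ o1 x y z = 0 /\ o2 x y z = 0 /\ o3 x y z = 1 /\ o4 x y z = 0)%N ->
   (Bsum k0 k1 k2 k3 k4)@_(mk3 x y z) = k3) /\
  ((o0 x y z = 0 /\ o1 x y z = 0 /\ o2 x y z = 0 /\ o3 x y z = 0 /\ o4 x y z = 1)%N ->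
   (Bsum k0 k1 k2 k3 k4)@_(mk3 x y z) = k4).
Proof.
rewrite bsumC; split; [|split; [|split; [|split]]];
  by move=> [-> [-> [-> [-> ->]]]]; rewrite ?(mulr0n, mulr1n, mulr0, mulr1, addr0, add0r).
Qed.

Ltac bcoef := first
  [ rewrite (proj1 (bsumCi _ _ _ _ _ _ _ _ _)); [|by vm_compute]
  | rewrite (proj1 (proj2 (bsumCi _ _ _ _ _ _ _ _ _))); [|by vm_compute]
  | rewrite (proj1 (proj2 (proj2 (bsumCi _ _ _ _ _ _ _ _ _)))); [|by vm_compute]
  | rewrite (proj1 (proj2 (proj2 (proj2 (bsumCi _ _ _ _ _ _ _ _ _))))); [|by vm_compute]
  | rewrite (proj2 (proj2 (proj2 (proj2 (bsumCi _ _ _ _ _ _ _ _ _))))); [|by vm_compute] ].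

Lemma reprB (R : realType) (f : {mpoly R[3]}) : f \is symmetric -> f \is 5.-homog ->
  f = Bsum (cA f) (cB f) (cC f) (cD f) (cE f).
Proof.
move=> Hs Hh; apply/mpolyP => m; rewrite (mk3_eta m).
move: (m ia) (m ib) (m ic) => x y z.
case: (eqVneq (x + y + z)%N 5) => Hd; last first.
  rewrite (dhomog_nemf_coeff Hh); last by rewrite -mdeg_mk3 in Hd.
  by rewrite (dhomog_nemf_coeff (Bsum_homog _ _ _ _ _ _)) //; rewrite -mdeg_mk3 in Hd.
have Hz : z = (5 - x - y)%N by move/eqP: Hd; lia.
have Hx : (x <= 5)%N by move/eqP: Hd; lia.
have Hy : (y <= 5 - x)%N by move/eqP: Hd; lia.
subst z; rewrite /cA /cB /cC /cD /cE.
move: Hx Hy {Hd}.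
case: x => [|[|[|[|[|[|x]]]]]]; case: y => [|[|[|[|[|[|y]]]]]];
  move=> H1 H2; try (exfalso; lia).
all: match goal with |- context [ (5 - ?a - ?b)%N ] =>
  let v := eval vm_compute in (5 - a - b)%N in rewrite (_ : (5 - a - b)%N = v) // end.
all: bcoef; rewrite ?(mulr0n, mulr1n, mulr0, mulr1, addr0, add0r).
all: first [ sref
  | etransitivity; [apply: sw01 => //|]; sref
  | etransitivity; [apply: sw12 => //|]; sref
  | etransitivity; [apply: sw01 => //|]; etransitivity; [apply: sw12 => //|]; sref
  | etransitivity; [apply: sw12 => //|]; etransitivity; [apply: sw01 => //|]; sref
  | etransitivity; [apply: sw01 => //|]; etransitivity; [apply: sw12 => //|];
    etransitivity; [apply: sw01 => //|]; sref ].
Qed.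

Lemma L0 {R : realType} (d p0 p1 p2 p3 : R) : 0 < d ->
  (forall s, 0 < s -> s <= d -> 0 <= p0 + s * p1 + s ^+ 2 * p2 + s ^+ 3 * p3) -> 0 <= p0.
Proof.
move=> Hd H; rewrite leNgt; apply/negP => Hp.
set P := - p0. have HP : 0 < P by rewrite /P oppr_gt0.
set K := p1 ^+ 2 + p2 ^+ 2 + p3 ^+ 2 + 3%:R.
have HK : 0 < K by rewrite /K; nra.
set D := P + d * P + 2%:R * K * d.
have HD : 0 < D by rewrite /D; nra.
set s := d * P / D.
have Hs : s * D = d * P by rewrite /s mulrVK // unitfE gt_eqF.
have s0 : 0 < s by rewrite /s divr_gt0 // mulr_gt0.
have s1 : s <= d by rewrite -(ler_pM2r HD) Hs; rewrite /D; nra.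
have s2 : s <= 1 by rewrite -(ler_pM2r HD) Hs mul1r; rewrite /D; nra.
have s3 : 2%:R * s * K <= P.
  rewrite -(ler_pM2r HD) (_ : 2%:R * s * K * D = 2%:R * K * (s * D)); last by ring.
  rewrite Hs /D; nra.
have := H s s0 s1.
have e1 : s * p1 <= s * (p1 ^+ 2 + 1) by rewrite ler_pM2l //; nra.
have q2 : s ^+ 2 <= s by rewrite expr2; nra.
have q3 : s ^+ 3 <= s by rewrite exprS; nra.
have e2 : s ^+ 2 * p2 <= s * (p2 ^+ 2 + 1).
  apply: (le_trans (y := s ^+ 2 * (p2 ^+ 2 + 1))).
    by rewrite ler_pM2l ?exprn_gt0 //; nra.
  by rewrite ler_pM2r //; nra.
have e3 : s ^+ 3 * p3 <= s * (p3 ^+ 2 + 1).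
  apply: (le_trans (y := s ^+ 3 * (p3 ^+ 2 + 1))).
    by rewrite ler_pM2l ?exprn_gt0 //; nra.
  by rewrite ler_pM2r //; nra.
have eK : s * (p1 ^+ 2 + 1) + s * (p2 ^+ 2 + 1) + s * (p3 ^+ 2 + 1) = s * K by rewrite /K; ring.
have eP : p0 = - P by rewrite /P opprK.
move=> HH; have : 2%:R * s * K = 2%:R * (s * K) by ring.
lra.
Qed.

Definition Fv {R : realType} (k0 k1 k2 k3 k4 a b c : R) : R :=
  k0 * (a^+5 + b^+5 + c^+5)
  + k1 * (a^+4*b + b^+4*c + c^+4*a + a*b^+4 + b*c^+4 + c*a^+4)
  + k2 * (a^+3*b^+2 + b^+3*c^+2 + c^+3*a^+2 + a^+2*b^+3 + b^+2*c^+3 + c^+2*a^+3)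
  + k3 * (a*b*c*(a^+2 + b^+2 + c^+2))
  + k4 * (a*b*c*(a*b + b*c + c*a)).

Lemma Fv111 {R : realType} (k0 k1 k2 k3 k4 : R) :
  Fv k0 k1 k2 k3 k4 1 1 1 = 3%:R * k0 + 6%:R * k1 + 6%:R * k2 + 3%:R * k3 + 3%:R * k4.
Proof. rewrite /Fv; ring. Qed.

Lemma Fv001 {R : realType} (k0 k1 k2 k3 k4 : R) : Fv k0 k1 k2 k3 k4 0 0 1 = k0.
Proof. rewrite /Fv; ring. Qed.

Definition qA {R : realType} (k1 k2 k3 : R) := 2%:R * k1.
Definition qB {R : realType} (k1 k2 k3 : R) := 4%:R * k1 + 2%:R * k2 + k3.
Definition qC {R : realType} (k1 k2 k3 : R) := 2%:R * k1 + 2%:R * k2.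

Lemma Gfact {R : realType} (k0 k1 k2 k3 k4 x : R) : k0 = 0 ->
  Fv k0 k1 k2 k3 k4 1 1 1 = 0 ->
  Fv k0 k1 k2 k3 k4 x 1 1 =
  (x - 1) ^+ 2 * (qA k1 k2 k3 * x ^+ 2 + qB k1 k2 k3 * x + qC k1 k2 k3).
Proof.
move=> -> ; rewrite Fv111 => H.
have -> : k4 = - (2%:R * k1 + 2%:R * k2 + k3) by lra.
rewrite /Fv /qA /qB /qC; ring.
Qed.

Lemma qnn {R : realType} (k0 k1 k2 k3 k4 : R) : k0 = 0 ->
  Fv k0 k1 k2 k3 k4 1 1 1 = 0 -> (forall x, 0 <= x -> 0 <= Fv k0 k1 k2 k3 k4 x 1 1) ->
  forall x, 0 <= x -> 0 <= qA k1 k2 k3 * x ^+ 2 + qB k1 k2 k3 * x + qC k1 k2 k3.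
Proof.
move=> H0 H1 Hn.
set A := qA k1 k2 k3; set B := qB k1 k2 k3; set C := qC k1 k2 k3.
have Hne : forall x, 0 <= x -> x != 1 -> 0 <= A * x ^+ 2 + B * x + C.
  move=> x Hx Hx1; have := Hn x Hx; rewrite (Gfact _ _ _ _ _ x H0 H1) -/A -/B -/C.
  rewrite pmulr_rge0 // exprn_even_gt0 //= subr_eq0 //.
move=> x Hx; case: (eqVneq x 1) => [->|Hx1]; last exact: Hne.
apply: (@L0 R 1 _ (2%:R * A + B) A 0) => // s s0 s1.
have := Hne (1 + s); rewrite (_ : A * (1 + s) ^+ 2 + B * (1 + s) + C =
  A * 1 ^+ 2 + B * 1 + C + s * (2%:R * A + B) + s ^+ 2 * A + s ^+ 3 * 0); last by ring.
apply; first lra.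
by rewrite -subr_eq0 addrAC subrr add0r gt_eqF.
Qed.

Lemma qroot {R : realType} (A B C t : R) : 0 < t ->
  (forall x, 0 <= x -> 0 <= A * x ^+ 2 + B * x + C) -> A * t ^+ 2 + B * t + C = 0 ->
  [/\ B = - (2%:R * A * t), C = A * t ^+ 2 & 0 <= A].
Proof.
move=> Ht Hq Hr.
have eC : C = - (A * t ^+ 2 + B * t) by lra.
set k := 2%:R * A * t + B.
have E : forall s, A * (t + s) ^+ 2 + B * (t + s) + C = s * (k + s * A).
  by move=> s; rewrite eC /k; ring.
have k1 : 0 <= k.
  apply: (@L0 R 1 k A 0 0) => // s s0 s1.
  have := Hq (t + s); rewrite E pmulr_rge0 //.
  rewrite (_ : k + s * A + s ^+ 2 * 0 + s ^+ 3 * 0 = k + s * A); last by ring.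
  by apply; lra.
have k2 : 0 <= - k.
  apply: (@L0 R t (- k) A 0 0) => // s s0 s1.
  have := Hq (t - s); rewrite E.
  rewrite (_ : - s * (k + - s * A) = s * (- k + s * A)); last by ring.
  rewrite pmulr_rge0 //.
  rewrite (_ : - k + s * A + s ^+ 2 * 0 + s ^+ 3 * 0 = - k + s * A); last by ring.
  by apply; lra.
have k0 : k = 0 by lra.
have HA : 0 <= A.
  have := Hq (t + 1); rewrite E k0 add0r mul1r mul1r; apply; lra.
split => //; first by rewrite /k in k0; lra.
rewrite eC; have -> : B = - (2%:R * A * t) by rewrite /k in k0; lra.
ring.
Qed.

Lemma qzero {R : realType} (A B C : R) :
  (forall x, 0 <= x -> 0 <= A * x ^+ 2 + B * x + C) -> C = 0 -> 0 <= B.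
Proof.
move=> Hq HC; apply: (@L0 R 1 B A 0 0) => // s s0 s1.
have := Hq s; rewrite HC addr0.
rewrite (_ : A * s ^+ 2 + B * s = s * (B + s * A + s ^+ 2 * 0 + s ^+ 3 * 0)); last by ring.
rewrite pmulr_rge0 //; apply; lra.
Qed.

Lemma c1nn {R : realType} (k0 k1 k2 k3 k4 : R) : k0 = 0 ->
  (forall a b c, 0 <= a -> 0 <= b -> 0 <= c -> 0 <= Fv k0 k1 k2 k3 k4 a b c) -> 0 <= k1.
Proof.
move=> H0 Hn; apply: (@L0 R 1 k1 k2 k2 k1) => // s s0 s1.
have := Hn 0 s 1 (lexx _) (ltW s0) ler01.
rewrite (_ : Fv k0 k1 k2 k3 k4 0 s 1 = s * (k1 + s * k2 + s ^+ 2 * k2 + s ^+ 3 * k1)).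
  by rewrite pmulr_rge0.
by rewrite /Fv H0; ring.
Qed.

Lemma d23nn {R : realType} (k0 k1 k2 k3 k4 : R) : k0 = 0 -> k1 = 0 ->
  (forall a b c, 0 <= a -> 0 <= b -> 0 <= c -> 0 <= Fv k0 k1 k2 k3 k4 a b c) ->
  0 <= 2%:R * k2 + k3.
Proof.
move=> H0 H1 Hn; apply: (@L0 R 1 _ (2%:R * k2 + 2%:R * k4) (2%:R * k3 + k4) (2%:R * k2)) => // s s0 s1.
have := Hn s s 1 (ltW s0) (ltW s0) ler01.
rewrite (_ : Fv k0 k1 k2 k3 k4 s s 1 = s ^+ 2 * (2%:R * k2 + k3 + s * (2%:R * k2 + 2%:R * k4) +
   s ^+ 2 * (2%:R * k3 + k4) + s ^+ 3 * (2%:R * k2))).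
  by rewrite pmulr_rge0 // exprn_gt0.
by rewrite /Fv H0 H1; ring.
Qed.

Lemma kvals {R : realType} (k0 k1 k2 k3 k4 t : R) : k0 = 0 ->
  Fv k0 k1 k2 k3 k4 1 1 1 = 0 ->
  qB k1 k2 k3 = - (2%:R * qA k1 k2 k3 * t) -> qC k1 k2 k3 = qA k1 k2 k3 * t ^+ 2 ->
  [/\ k2 = k1 * (t ^+ 2 - 1), k3 = k1 * (- (2%:R * (t + 1) ^+ 2)) &
      k4 = k1 * (4%:R * t + 2%:R)].
Proof.
move=> H0; rewrite Fv111 H0 /qA /qB /qC => H1 HB HC.
have e2 : k2 = k1 * (t ^+ 2 - 1).
  rewrite (_ : k1 * (t ^+ 2 - 1) = k1 * t ^+ 2 - k1); last by ring.
  lra.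
have e3 : k3 = k1 * (- (2%:R * (t + 1) ^+ 2)).
  rewrite (_ : k3 = - (2%:R * (2%:R * k1) * t) - 4%:R * k1 - 2%:R * k2); last by lra.
  rewrite e2; ring.
split => //.
have -> : k4 = - (2%:R * k1 + 2%:R * k2 + k3) by lra.
rewrite e2 e3; ring.
Qed.

Lemma dbM (R : realType) x y z : db (M x y z) = y%:R *: (M x y.-1 z : {mpoly R[3]}).
Proof.
rewrite /db /M mderivX; congr (_ *: 'X_[_]); first by rewrite mk3E ibE.
apply/mnmP => j; rewrite mnmBE !mk3E mnm1E; case: (ord3P j) => ->;
  rewrite ?iaE ?ibE ?icE /= ?eqxx.
- by rewrite iba subn0.
- by rewrite subn1.
- by rewrite ibc subn0.
Qed.

Lemma evB (R : realType) (k0 k1 k2 k3 k4 a b c : R) :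
  ev (Bsum k0 k1 k2 k3 k4) a b c = Fv k0 k1 k2 k3 k4 a b c.
Proof.
rewrite /ev /Bsum /B0 /B1 /B2 /B3 /B4 !(mevalD, mevalZ).
rewrite -!/(ev _ a b c) !evM /Fv; ring.
Qed.

Lemma daM' (R : realType) x y z : mderiv ia (M x y z) = x%:R *: (M x.-1 y z : {mpoly R[3]}).
Proof. exact: daM. Qed.
Lemma dbM' (R : realType) x y z : mderiv ib (M x y z) = y%:R *: (M x y.-1 z : {mpoly R[3]}).
Proof. exact: dbM. Qed.
Lemma evM' (R : realType) x y z (a b c : R) : (M x y z).@[pt a b c] = a ^+ x * b ^+ y * c ^+ z.
Proof. exact: evM. Qed.

Ltac dsimp := rewrite /Bsum /B0 /B1 /B2 /B3 /B4 /da /db !(mderivD, mderivZ, daM', dbM') /=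
  /ev !(mevalD, mevalZ, evM').

Lemma evaa111 (R : realType) (k0 k1 k2 k3 k4 : R) :
  ev (da (da (Bsum k0 k1 k2 k3 k4))) 1 1 1 =
  20%:R * k0 + 24%:R * k1 + 16%:R * k2 + 6%:R * k3 + 4%:R * k4.
Proof. dsimp; rewrite !expr1n; ring. Qed.

Lemma eva001 (R : realType) (k0 k1 k2 k3 k4 : R) :
  ev (da (Bsum k0 k1 k2 k3 k4)) 0 0 1 = k1.
Proof. dsimp; rewrite ?expr1n ?expr0n /=; ring. Qed.

Lemma evaa001 (R : realType) (k0 k1 k2 k3 k4 : R) :
  ev (da (da (Bsum k0 k1 k2 k3 k4))) 0 0 1 = 2%:R * k2.
Proof. dsimp; rewrite ?expr1n ?expr0n /=; ring. Qed.

Lemma evba001 (R : realType) (k0 k1 k2 k3 k4 : R) :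
  ev (db (da (Bsum k0 k1 k2 k3 k4))) 0 0 1 = k3.
Proof. dsimp; rewrite ?expr1n ?expr0n /=; ring. Qed.

Lemma msymM3 (R : realType) (s : 'S_3) x y z :
  msym s (M x y z : {mpoly R[3]}) =
  M (nth 0%N [:: x; y; z] ((s^-1)%g ia)) (nth 0%N [:: x; y; z] ((s^-1)%g ib))
    (nth 0%N [:: x; y; z] ((s^-1)%g ic)).
Proof. by rewrite /M msymX mk3_perm. Qed.

Lemma perm3_ind (p : 'S_3) (P : nat -> nat -> nat -> Prop) :
  P 0 1 2 -> P 0 2 1 -> P 1 0 2 -> P 1 2 0 -> P 2 0 1 -> P 2 1 0 ->
  P (nat_of_ord (p ia)) (nat_of_ord (p ib)) (nat_of_ord (p ic)).
Proof.
have d1 : (nat_of_ord (p ia) != p ib) by rewrite val_eqE (inj_eq perm_inj) iab.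
have d2 : (nat_of_ord (p ia) != p ic) by rewrite val_eqE (inj_eq perm_inj) iac.
have d3 : (nat_of_ord (p ib) != p ic) by rewrite val_eqE (inj_eq perm_inj) ibc.
move: d1 d2 d3 (ltn_ord (p ia)) (ltn_ord (p ib)) (ltn_ord (p ic)).
move: (nat_of_ord (p ia)) (nat_of_ord (p ib)) (nat_of_ord (p ic)) => u v w.
by case: u => [|[|[|u]]]; case: v => [|[|[|v]]]; case: w => [|[|[|w]]].
Qed.

Lemma Bi_sym (R : realType) :
  [/\ (B0 : {mpoly R[3]}) \is symmetric, (B1 : {mpoly R[3]}) \is symmetric,
    (B2 : {mpoly R[3]}) \is symmetric, (B3 : {mpoly R[3]}) \is symmetric &
    (B4 : {mpoly R[3]}) \is symmetric].
Proof.
split; apply/issymP => s; rewrite /B0 /B1 /B2 /B3 /B4 !msymD !msymM3.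
all: pattern (nat_of_ord ((s^-1)%g ia)), (nat_of_ord ((s^-1)%g ib)), (nat_of_ord ((s^-1)%g ic)).
all: apply: perm3_ind => /=; ring.
Qed.

Lemma B_sym (R : realType) (k0 k1 k2 k3 k4 : R) : Bsum k0 k1 k2 k3 k4 \is symmetric.
Proof.
case: (Bi_sym R) => h0 h1 h2 h3 h4.
rewrite /Bsum; apply: rpredD; [apply: rpredD; [apply: rpredD; [apply: rpredD|]|]|];
  exact: rpredZ.
Qed.

Lemma Bsum_scale {R : realType} (l k0 k1 k2 k3 k4 : R) :
  l *: Bsum k0 k1 k2 k3 k4 = Bsum (l * k0) (l * k1) (l * k2) (l * k3) (l * k4).
Proof. by rewrite /Bsum !scalerDr !scalerA. Qed.

Lemma setup {R : realType} {f : {mpoly R[3]}} : Ps35 f ->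
  exists k0 k1 k2 k3 k4 : R, f = Bsum k0 k1 k2 k3 k4 /\
    (forall a b c, 0 <= a -> 0 <= b -> 0 <= c -> 0 <= Fv k0 k1 k2 k3 k4 a b c).
Proof.
case=> [[Hs Hh] Hn]; have E := reprB _ _ Hs Hh.
do 5 eexists; split; first exact: E.
by move=> a b c Ha Hb Hc; rewrite -evB -E; apply: Hn.
Qed.

Lemma final_t {R : realType} {t k0 k1 k2 k3 k4 : R} : k0 = 0 ->
  Fv k0 k1 k2 k3 k4 1 1 1 = 0 ->
  qB k1 k2 k3 = - (2%:R * qA k1 k2 k3 * t) -> qC k1 k2 k3 = qA k1 k2 k3 * t ^+ 2 ->
  0 <= qA k1 k2 k3 ->
  exists l : R, 0 <= l /\ Bsum k0 k1 k2 k3 k4 = l *: eD t.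
Proof.
move=> H0 H1 HB HC HA.
case: (kvals _ _ _ _ _ _ H0 H1 HB HC) => e2 e3 e4.
exists k1; split; first by move: HA; rewrite /qA; lra.
by rewrite eDE Bsum_scale H0 e2 e3 e4 mulr0 mulr1.
Qed.

Lemma part2 {R : realType} (t : R) (f : {mpoly R[3]}) : 0 < t -> t != 1 -> Ps35 f ->
  ev f t 1 1 = 0 -> ev f 1 1 1 = 0 -> ev f 0 0 1 = 0 ->
  exists l : R, 0 <= l /\ f = l *: eD t.
Proof.
move=> Ht Ht1 Hf Et E1 E0.
case: (setup Hf) => k0 [k1 [k2 [k3 [k4 [Ef Hn]]]]].
rewrite Ef evB in Et; rewrite Ef evB in E1; rewrite Ef evB in E0.
have H0 : k0 = 0 by rewrite Fv001 in E0.
have Hq' := qnn _ _ _ _ _ H0 E1 (fun x Hx => Hn x 1 1 Hx ler01 ler01).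
have Hqt : qA k1 k2 k3 * t ^+ 2 + qB k1 k2 k3 * t + qC k1 k2 k3 = 0.
  move: Et; rewrite (Gfact _ _ _ _ _ t H0 E1) => /eqP; rewrite mulf_eq0 expf_eq0 subr_eq0.
  by rewrite (negbTE Ht1) /= => /eqP.
have [HB HC HA] := qroot _ _ _ _ Ht Hq' Hqt.
rewrite Ef; exact: final_t H0 E1 HB HC HA.
Qed.

Lemma part3 {R : realType} (f : {mpoly R[3]}) : Ps35 f ->
  ev f 1 1 1 = 0 -> ev (da (da f)) 1 1 1 = 0 -> ev f 0 0 1 = 0 ->
  exists l : R, 0 <= l /\ f = l *: eD 1.
Proof.
move=> Hf E1 E2 E0.
case: (setup Hf) => k0 [k1 [k2 [k3 [k4 [Ef Hn]]]]].
rewrite Ef evB in E1; rewrite Ef evaa111 in E2; rewrite Ef evB in E0.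
have H0 : k0 = 0 by rewrite Fv001 in E0.
have Hq' := qnn _ _ _ _ _ H0 E1 (fun x Hx => Hn x 1 1 Hx ler01 ler01).
have Hqt : qA k1 k2 k3 * 1 ^+ 2 + qB k1 k2 k3 * 1 + qC k1 k2 k3 = 0.
  move: E1 E2; rewrite Fv111 H0 /qA /qB /qC expr1n !mulr1; lra.
have [HB HC HA] := qroot _ _ _ _ ltr01 Hq' Hqt.
rewrite Ef; exact: final_t H0 E1 HB HC HA.
Qed.

Lemma part4 {R : realType} (f : {mpoly R[3]}) : Ps35 f ->
  ev f 1 1 1 = 0 -> ev f 0 0 1 = 0 -> ev (da f) 0 0 1 = 0 ->
  ev (da (da f)) 0 0 1 + ev (db (da f)) 0 0 1 = 0 ->
  exists l : R, 0 <= l /\ f = l *: eDinf R.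
Proof.
move=> Hf E1 E0 Ea Eaa.
case: (setup Hf) => k0 [k1 [k2 [k3 [k4 [Ef Hn]]]]].
rewrite Ef evB in E1; rewrite Ef evB in E0; rewrite Ef eva001 in Ea;
  rewrite Ef evaa001 evba001 in Eaa.
have H0 : k0 = 0 by rewrite Fv001 in E0.
have H011 : Fv k0 k1 k2 k3 k4 0 1 1 = 2%:R * k0 + 2%:R * k1 + 2%:R * k2 by rewrite /Fv; ring.
have := Hn 0 1 1 (lexx _) ler01 ler01; rewrite H011 => Hp.
move: E1; rewrite Fv111 => E1.
exists k2; split; first lra.
rewrite Ef eDinfE Bsum_scale.
have -> : k3 = k2 * - 2%:R by lra.
have -> : k4 = k2 * 0 by lra.
by rewrite H0 Ea mulr0 mulr1.
Qed.

Definition NN {R : realType} (k0 k1 k2 k3 k4 : R) :=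
  forall a b c, 0 <= a -> 0 <= b -> 0 <= c -> 0 <= Fv k0 k1 k2 k3 k4 a b c.

Lemma FvD {R : realType} (k0 k1 k2 k3 k4 m0 m1 m2 m3 m4 a b c : R) :
  Fv k0 k1 k2 k3 k4 a b c + Fv m0 m1 m2 m3 m4 a b c =
  Fv (k0 + m0) (k1 + m1) (k2 + m2) (k3 + m3) (k4 + m4) a b c.
Proof. rewrite /Fv; ring. Qed.

Lemma split0 {R : realType} (x y : R) : 0 <= x -> 0 <= y -> x + y = 0 -> x = 0 /\ y = 0.
Proof. move=> *; split; lra. Qed.

Lemma vanish {R : realType} {k0 k1 k2 k3 k4 m0 m1 m2 m3 m4 e0 e1 e2 e3 e4 : R} {a b c : R} :
  NN k0 k1 k2 k3 k4 -> NN m0 m1 m2 m3 m4 ->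
  k0 + m0 = e0 -> k1 + m1 = e1 -> k2 + m2 = e2 -> k3 + m3 = e3 -> k4 + m4 = e4 ->
  0 <= a -> 0 <= b -> 0 <= c -> Fv e0 e1 e2 e3 e4 a b c = 0 ->
  Fv k0 k1 k2 k3 k4 a b c = 0 /\ Fv m0 m1 m2 m3 m4 a b c = 0.
Proof.
move=> Hk Hm <- <- <- <- <- Ha Hb Hc; rewrite -FvD; apply: split0.
- exact: Hk. - exact: Hm.
Qed.

Lemma extD_core {R : realType} {t k0 k1 k2 k3 k4 m0 m1 m2 m3 m4 : R} : 0 <= t ->
  NN k0 k1 k2 k3 k4 -> NN m0 m1 m2 m3 m4 ->
  k0 + m0 = 0 -> k1 + m1 = 1 -> k2 + m2 = t ^+ 2 - 1 ->
  k3 + m3 = - (2%:R * (t + 1) ^+ 2) -> k4 + m4 = 4%:R * t + 2%:R ->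
  [/\ k0 = 0, Fv k0 k1 k2 k3 k4 1 1 1 = 0,
    qB k1 k2 k3 = - (2%:R * qA k1 k2 k3 * t), qC k1 k2 k3 = qA k1 k2 k3 * t ^+ 2 &
    0 <= qA k1 k2 k3].
Proof.
move=> Ht Hk Hm E0 E1 E2 E3 E4.
have V := vanish Hk Hm E0 E1 E2 E3 E4.
have [Z0 Z0'] : Fv k0 k1 k2 k3 k4 0 0 1 = 0 /\ Fv m0 m1 m2 m3 m4 0 0 1 = 0.
  by apply: V => //; rewrite /Fv; ring.
rewrite !Fv001 in Z0 Z0'.
have [Z1 Z1'] : Fv k0 k1 k2 k3 k4 1 1 1 = 0 /\ Fv m0 m1 m2 m3 m4 1 1 1 = 0.
  by apply: V => //; rewrite /Fv; ring.
have Hqk := qnn _ _ _ _ _ Z0 Z1 (fun x Hx => Hk x 1 1 Hx ler01 ler01).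
have Hqm := qnn _ _ _ _ _ Z0' Z1' (fun x Hx => Hm x 1 1 Hx ler01 ler01).
have [Zt _] : Fv k0 k1 k2 k3 k4 t 1 1 = 0 /\ Fv m0 m1 m2 m3 m4 t 1 1 = 0.
  by apply: V => //; rewrite /Fv; ring.
rewrite (Gfact _ _ _ _ _ t Z0 Z1) in Zt.
have qsum : forall x, (qA k1 k2 k3 * x ^+ 2 + qB k1 k2 k3 * x + qC k1 k2 k3) +
    (qA m1 m2 m3 * x ^+ 2 + qB m1 m2 m3 * x + qC m1 m2 m3) =
    2%:R * (x - t) ^+ 2.
  move=> x; rewrite /qA /qB /qC.
  have -> : m1 = 1 - k1 by lra.
  have -> : m2 = t ^+ 2 - 1 - k2 by lra.
  have -> : m3 = - (2%:R * (t + 1) ^+ 2) - k3 by lra.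
  ring.
suff [HB HC HA] : [/\ qB k1 k2 k3 = - (2%:R * qA k1 k2 k3 * t),
  qC k1 k2 k3 = qA k1 k2 k3 * t ^+ 2 & 0 <= qA k1 k2 k3] by split.
case: (eqVneq t 0) => [Ht0|Htn0].
  subst t.
  have HC : qC k1 k2 k3 = 0.
    by move: Zt; rewrite (_ : (0 - 1) ^+ 2 * (qA k1 k2 k3 * 0 ^+ 2 + qB k1 k2 k3 * 0 +
      qC k1 k2 k3) = qC k1 k2 k3) //; ring.
  have HCm : qC m1 m2 m3 = 0.
    move: (qsum 0); rewrite HC.
    rewrite (_ : qA k1 k2 k3 * 0 ^+ 2 + qB k1 k2 k3 * 0 + 0 + (qA m1 m2 m3 * 0 ^+ 2 +
      qB m1 m2 m3 * 0 + qC m1 m2 m3) = qC m1 m2 m3); last by ring.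
    by rewrite subrr expr0n /= mulr0.
  have HB := qzero _ _ _ Hqk HC.
  have HBm := qzero _ _ _ Hqm HCm.
  have qs1 := qsum 1; have qs2 := qsum 2%:R.
  have Bk : qB k1 k2 k3 = 0.
    move: qs1 qs2; rewrite HC HCm !subr0 !expr1n !mulr1 !addr0 => qs1 qs2.
    have e : qB k1 k2 k3 + qB m1 m2 m3 = 0.
      move: qs1 qs2; rewrite !expr2; lra.
    lra.
  have HA : 0 <= qA k1 k2 k3.
    have := Hqk 1 ler01; rewrite HC Bk expr1n !mulr1 !addr0 //.
  split; [rewrite Bk; ring | rewrite HC; ring | by []].
have Ht' : 0 < t by rewrite lt_neqAle eq_sym Htn0.
have Hqt : qA k1 k2 k3 * t ^+ 2 + qB k1 k2 k3 * t + qC k1 k2 k3 = 0.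
  case: (eqVneq t 1) => [Ht1|Htn1].
    subst t; have := Hqk 1 ler01; have := Hqm 1 ler01; have := qsum 1.
    rewrite subrr expr0n /= mulr0; lra.
  move/eqP: Zt; rewrite mulf_eq0 expf_eq0 subr_eq0 (negbTE Htn1) /=; by move/eqP.
exact: (qroot _ _ _ _ Ht' Hqk Hqt).
Qed.

Lemma extDinf_core {R : realType} {k0 k1 k2 k3 k4 m0 m1 m2 m3 m4 : R} :
  NN k0 k1 k2 k3 k4 -> NN m0 m1 m2 m3 m4 ->
  k0 + m0 = 0 -> k1 + m1 = 0 -> k2 + m2 = 1 -> k3 + m3 = - 2%:R -> k4 + m4 = 0 ->
  [/\ k0 = 0, k1 = 0, k3 = k2 * - 2%:R, k4 = k2 * 0 & 0 <= k2].
Proof.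
move=> Hk Hm E0 E1 E2 E3 E4.
have V := vanish Hk Hm E0 E1 E2 E3 E4.
have [Z0 Z0'] : Fv k0 k1 k2 k3 k4 0 0 1 = 0 /\ Fv m0 m1 m2 m3 m4 0 0 1 = 0.
  by apply: V => //; rewrite /Fv; ring.
rewrite !Fv001 in Z0 Z0'.
have [Z1 Z1'] : Fv k0 k1 k2 k3 k4 1 1 1 = 0 /\ Fv m0 m1 m2 m3 m4 1 1 1 = 0.
  by apply: V => //; rewrite /Fv; ring.
have c1 := c1nn _ _ _ _ _ Z0 Hk.
have c1' := c1nn _ _ _ _ _ Z0' Hm.
have K1 : k1 = 0 by lra.
have K1' : m1 = 0 by lra.
have d := d23nn _ _ _ _ _ Z0 K1 Hk.
have d' := d23nn _ _ _ _ _ Z0' K1' Hm.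
have K3 : k3 = k2 * - 2%:R by lra.
have K4 : k4 = k2 * 0.
  by move: Z1; rewrite Fv111 Z0 K1 K3; lra.
have P : 0 <= Fv k0 k1 k2 k3 k4 0 1 1 by apply: Hk => //; rewrite ?ler01.
move: P; rewrite (_ : Fv k0 k1 k2 k3 k4 0 1 1 = 2%:R * k2); last by rewrite /Fv Z0 K1; ring.
by move=> P; split => //; lra.
Qed.

Lemma Bsum_add {R : realType} (k0 k1 k2 k3 k4 m0 m1 m2 m3 m4 : R) :
  Bsum k0 k1 k2 k3 k4 + Bsum m0 m1 m2 m3 m4 =
  Bsum (k0 + m0) (k1 + m1) (k2 + m2) (k3 + m3) (k4 + m4).
Proof. rewrite /Bsum -!mul_mpolyC; ring. Qed.

Lemma Bsum_coef {R : realType} (k0 k1 k2 k3 k4 : R) :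
  [/\ (Bsum k0 k1 k2 k3 k4)@_(mk3 5 0 0) = k0, (Bsum k0 k1 k2 k3 k4)@_(mk3 4 1 0) = k1,
      (Bsum k0 k1 k2 k3 k4)@_(mk3 3 2 0) = k2, (Bsum k0 k1 k2 k3 k4)@_(mk3 3 1 1) = k3 &
      (Bsum k0 k1 k2 k3 k4)@_(mk3 2 2 1) = k4].
Proof. by split; bcoef. Qed.

Lemma Bsum_inj {R : realType} (k0 k1 k2 k3 k4 m0 m1 m2 m3 m4 : R) :
  Bsum k0 k1 k2 k3 k4 = Bsum m0 m1 m2 m3 m4 ->
  [/\ k0 = m0, k1 = m1, k2 = m2, k3 = m3 & k4 = m4].
Proof.
move=> E; case: (Bsum_coef k0 k1 k2 k3 k4) => h0 h1 h2 h3 h4.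
case: (Bsum_coef m0 m1 m2 m3 m4) => g0 g1 g2 g3 g4.
split.
- by rewrite -h0 -g0 E.
- by rewrite -h1 -g1 E.
- by rewrite -h2 -g2 E.
- by rewrite -h3 -g3 E.
- by rewrite -h4 -g4 E.
Qed.

Lemma Ps35_Bsum {R : realType} (k0 k1 k2 k3 k4 : R) :
  NN k0 k1 k2 k3 k4 -> Ps35 (Bsum k0 k1 k2 k3 k4).
Proof.
move=> H; split; first by split; [exact: B_sym | exact: Bsum_homog].
by move=> a b c Ha Hb Hc; rewrite evB; apply: H.
Qed.

Lemma NN_eD {R : realType} (t : R) :
  NN 0 1 (t ^+ 2 - 1) (- (2%:R * (t + 1) ^+ 2)) (4%:R * t + 2%:R).
Proof.
move=> a b c Ha Hb Hc.
rewrite (_ : Fv _ _ _ _ _ a b c = a * (b - c) ^+ 2 * (b + c - (t + 1) * a) ^+ 2 +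
  b * (c - a) ^+ 2 * (c + a - (t + 1) * b) ^+ 2 + c * (a - b) ^+ 2 * (a + b - (t + 1) * c) ^+ 2);
  last by rewrite /Fv; ring.
have T : forall x y z : R, 0 <= x -> 0 <= x * y ^+ 2 * z ^+ 2.
  by move=> x y z hx; rewrite mulr_ge0 ?sqr_ge0 // mulr_ge0 ?sqr_ge0.
by rewrite !addr_ge0 // T.
Qed.

Lemma NN_eDinf {R : realType} : NN 0 0 1 (- 2%:R) (0 : R).
Proof.
move=> a b c Ha Hb Hc.
rewrite (_ : Fv _ _ _ _ _ a b c = a ^+ 3 * (b - c) ^+ 2 + b ^+ 3 * (c - a) ^+ 2 +
  c ^+ 3 * (a - b) ^+ 2); last by rewrite /Fv; ring.
have T : forall x y : R, 0 <= x -> 0 <= x ^+ 3 * y ^+ 2.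
  by move=> x y hx; rewrite mulr_ge0 ?sqr_ge0 ?exprn_ge0.
by rewrite !addr_ge0 // T.
Qed.

Lemma ev0 {R : realType} (a b c : R) : ev (0 : {mpoly R[3]}) a b c = 0.
Proof. exact: meval0. Qed.

Lemma eD_neq0 {R : realType} (t : R) : eD t != 0.
Proof.
apply/eqP => E; have := congr1 (fun p => ev p 0 1 2%:R) E.
rewrite /= ev0 eDE evB.
rewrite (_ : Fv _ _ _ _ _ _ _ _ = 12%:R * t ^+ 2 + 6%:R); last by rewrite /Fv; ring.
move=> H; have : 0 <= t ^+ 2 by exact: sqr_ge0.
lra.
Qed.

Lemma eDinf_neq0 {R : realType} : eDinf R != 0.
Proof.
apply/eqP => E; have := congr1 (fun p => ev p 1 1 0) E.
rewrite /= ev0 eDinfE evB /Fv.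
move=> H; have : (2%:R : R) = 0 by rewrite -H; ring.
by move/eqP; rewrite pnatr_eq0.
Qed.

Lemma ext_eD {R : realType} (t : R) : 0 <= t -> extremal (@Ps35 R) (eD t).
Proof.
move=> Ht; split; first by rewrite eDE; apply: Ps35_Bsum; exact: NN_eD.
split; first exact: eD_neq0.
move=> g h Hg Hh E.
case: (setup Hg) => k0 [k1 [k2 [k3 [k4 [Eg Nk]]]]].
case: (setup Hh) => m0 [m1 [m2 [m3 [m4 [Eh Nm]]]]].
rewrite Eg Eh eDE Bsum_add in E; rewrite Eg Eh.
move/Bsum_inj: E => [E0 E1 E2 E3 E4].
split.
- case: (extD_core Ht Nk Nm (esym E0) (esym E1) (esym E2) (esym E3) (esym E4))
    => H0 H1 HB HC HA.
  exact: final_t H0 H1 HB HC HA.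
- rewrite (addrC k0) (addrC k1) (addrC k2) (addrC k3) (addrC k4) in E0 E1 E2 E3 E4.
  case: (extD_core Ht Nm Nk (esym E0) (esym E1) (esym E2) (esym E3) (esym E4))
    => H0 H1 HB HC HA.
  exact: final_t H0 H1 HB HC HA.
Qed.

Lemma ext_eDinf {R : realType} : extremal (@Ps35 R) (eDinf R).
Proof.
split; first by rewrite eDinfE; apply: Ps35_Bsum; exact: NN_eDinf.
split; first exact: eDinf_neq0.
move=> g h Hg Hh E.
case: (setup Hg) => k0 [k1 [k2 [k3 [k4 [Eg Nk]]]]].
case: (setup Hh) => m0 [m1 [m2 [m3 [m4 [Eh Nm]]]]].
rewrite Eg Eh eDinfE Bsum_add in E; rewrite Eg Eh.
move/Bsum_inj: E => [E0 E1 E2 E3 E4].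
split.
- case: (extDinf_core Nk Nm (esym E0) (esym E1) (esym E2) (esym E3) (esym E4))
    => H0 H1 H3 H4 HA.
  by exists k2; split => //; rewrite eDinfE Bsum_scale H0 H1 H3 H4 !mulr0 mulr1.
- rewrite (addrC k0) (addrC k1) (addrC k2) (addrC k3) (addrC k4) in E0 E1 E2 E3 E4.
  case: (extDinf_core Nm Nk (esym E0) (esym E1) (esym E2) (esym E3) (esym E4))
    => H0 H1 H3 H4 HA.
  by exists m2; split => //; rewrite eDinfE Bsum_scale H0 H1 H3 H4 !mulr0 mulr1.
Qed.

Definition gp {R : realType} (t : R) : {mpoly R[3]} :=
  Xa R * (Xb R - Xc R) ^+ 2 * (Xb R + Xc R - (t + 1) *: Xa R) ^+ 2.

Lemma X_h {R : realType} (i : 'I_3) : ('X_i : {mpoly R[3]}) \is 1.-homog.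
Proof. by rewrite dhomogX /= mdeg1. Qed.

Lemma gp_h {R : realType} (t : R) : gp t \is 5.-homog.
Proof.
rewrite /gp /Xa /Xb /Xc.
have h1 : ('X_ib - 'X_ic : {mpoly R[3]}) \is 1.-homog by rewrite rpredB ?X_h.
have h2 : ('X_ib + 'X_ic - (t + 1) *: 'X_ia : {mpoly R[3]}) \is 1.-homog.
  by rewrite rpredB ?rpredD ?rpredZ ?X_h.
have := dhomogM (dhomogM (X_h ia) (dhomogMn 2 h1)) (dhomogMn 2 h2).
by [].
Qed.

Lemma pt_a {R : realType} (a b c : R) : pt a b c ia = a. Proof. by rewrite /pt iaE. Qed.
Lemma pt_b {R : realType} (a b c : R) : pt a b c ib = b. Proof. by rewrite /pt ibE. Qed.
Lemma pt_c {R : realType} (a b c : R) : pt a b c ic = c. Proof. by rewrite /pt icE. Qed.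

Lemma ev_gp {R : realType} (t a b c : R) :
  ev (gp t) a b c = a * (b - c) ^+ 2 * (b + c - (t + 1) * a) ^+ 2.
Proof.
rewrite /ev /gp /Xa /Xb /Xc !(mevalM, mevalB, mevalD, mevalZ, rmorphXn, mevalXU).
by rewrite pt_a pt_b pt_c.
Qed.

Lemma not_ext_eD {R : realType} (t : R) : 0 <= t -> ~ extremal (@P35 R) (eD t).
Proof.
move=> Ht [_ [_ H]].
have Hg : P35 (gp t).
  split; first exact: gp_h.
  by move=> a b c Ha Hb Hc; rewrite ev_gp mulr_ge0 ?sqr_ge0 // mulr_ge0 ?sqr_ge0.
have Hh : P35 (eD t - gp t).
  split; first by rewrite rpredB ?gp_h // eDE Bsum_homog.
  move=> a b c Ha Hb Hc; rewrite /ev mevalB -/(ev _ a b c) -/(ev _ a b c) ev_gp eDE evB.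
  rewrite (_ : Fv _ _ _ _ _ a b c - a * (b - c) ^+ 2 * (b + c - (t + 1) * a) ^+ 2 =
    b * (c - a) ^+ 2 * (c + a - (t + 1) * b) ^+ 2 + c * (a - b) ^+ 2 * (a + b - (t + 1) * c) ^+ 2);
    last by rewrite /Fv; ring.
  by rewrite addr_ge0 // mulr_ge0 ?sqr_ge0 // mulr_ge0 ?sqr_ge0.
have E : eD t = gp t + (eD t - gp t) by rewrite addrC subrK.
case: (H _ _ Hg Hh E) => [[l [Hl El]] _].
have evZ : forall p a b c, ev (l *: p) a b c = l * ev p a b c.
  by move=> p a b c; rewrite /ev mevalZ.
have e1 := congr1 (fun p => ev p 0 1 2%:R) El.
have e2 := congr1 (fun p => ev p 2%:R 0 1) El.
move: e1 e2; rewrite /= !evZ !ev_gp eDE !evB => e1 e2.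
rewrite (_ : Fv _ _ _ _ _ 0 1 2%:R = 12%:R * t ^+ 2 + 6%:R) in e1; last by rewrite /Fv; ring.
rewrite !mul0r in e1.
have l0 : l = 0.
  move/esym/eqP: e1; rewrite mulf_eq0 => /orP [/eqP //|]; move=> /eqP h.
  have : 0 <= t ^+ 2 by exact: sqr_ge0.
  lra.
move: e2; rewrite l0 mul0r => e2.
have : 2%:R * (2%:R * t + 1) ^+ 2 = 0 by rewrite -[RHS]e2; ring.
nra.
Qed.

Theorem theorem4p4 (R : realType) :
  (* (1) *)
  (forall t : R, 0 <= t ->
     extremal (@Ps35 R) (eD t) /\ ~ extremal (@P35 R) (eD t)) /\
  (* (2) *)
  (forall (t : R) (f : {mpoly R[3]}), 0 < t -> t != 1 -> Ps35 f ->
     ev f t 1 1 = 0 -> ev f 1 1 1 = 0 -> ev f 0 0 1 = 0 ->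
     exists l : R, 0 <= l /\ f = l *: eD t) /\
  (* (3) *)
  ((forall f : {mpoly R[3]}, Ps35 f ->
     ev f 1 1 1 = 0 -> ev (da (da f)) 1 1 1 = 0 -> ev f 0 0 1 = 0 ->
     exists l : R, 0 <= l /\ f = l *: eD 1) /\
   eD (1 : R) = s1 R - 8%:R *: s3 R /\ extremal (@Ps35 R) (eD 1)) /\
  (* (4) *)
  ((forall f : {mpoly R[3]}, Ps35 f ->
     ev f 1 1 1 = 0 -> ev f 0 0 1 = 0 -> ev (da f) 0 0 1 = 0 ->
     ev (da (da f)) 0 0 1 + ev (db (da f)) 0 0 1 = 0 ->
     exists l : R, 0 <= l /\ f = l *: eDinf R) /\
   eDinf R = s2 R - 2%:R *: s3 R /\ extremal (@Ps35 R) (eDinf R)).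
Proof.
split; first by move=> t Ht; split; [exact: ext_eD | exact: not_ext_eD].
split; first by move=> t f Ht Ht1 Hf; exact: part2.
split.
  split; first by move=> f Hf; exact: part3.
  split; last exact: ext_eD ler01.
  rewrite /eD -!mul_mpolyC; ring.
split; first by move=> f Hf; exact: part4.
by split; last exact: ext_eDinf.
Qed.
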